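(* Let $q=rQ$ with $\gcd(r,Q)=1$, and suppose that $a_q,a_r,a_Q:\mathbb Z\to\mathbb C$ are functions of periods $q,r,Q$ respectively, bounded by $1$ in absolute value, with $a_q(n)=a_r(n)a_Q(n)$. Let $I$ be an interval of length $N$, and for a function $\phi$ set $\mathbb E(\phi):=\frac1N\sum_{n\in I}\phi(n)$. Let $M=\lfloor(N/r)^{2/3}\rfloor$ and suppose $M\ge5$. Then $$|\mathbb E(a_q)|^2\le\frac5M+\frac2{M^2}\sum_{1\le i\ne j\le M}|\mathbb E(A_{(ir,jr)})|,$$ where $A_{(ir,jr)}(n):=a_Q(n+ir)\overline{a_Q(n+jr)}$.
   Context: The sums over $I$ are over integers $n\in I$. *)

(* Defs.v *)
From mathcomp Require Import all_boot all_order all_algebra all_field.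
Set Implicit Arguments. Unset Strict Implicit. Unset Printing Implicit Defensive.
Import Order.TTheory GRing.Theory Num.Theory.
Local Open Scope ring_scope.

Definition avgI (a : int) (N : nat) (C : numClosedFieldType) (phi : int -> C) : C :=
  (N%:R)^-1 * \sum_(0 <= k < N) phi (a + k%:Z).

(* M = floor((N/r)^(2/3)) for naturals N, r with r > 0:
   M <= (N/r)^(2/3) < M+1  <=>  M^3 r^2 <= N^2 < (M+1)^3 r^2. *)
Definition is_floor_pow23 (N r M : nat) : Prop :=
  (M ^ 3 * r ^ 2 <= N ^ 2)%N /\ (N ^ 2 < M.+1 ^ 3 * r ^ 2)%N.

(* Main.v *)
Require Import Defs.
From mathcomp Require Import all_boot all_order all_algebra all_field.
From mathcomp Require Import ring zify.
Import Order.TTheory GRing.Theory Num.Theory.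
Local Open Scope ring_scope.

Section H.
Variable C : numClosedFieldType.

Lemma shift_bound (f : int -> C) (hf : forall n, `|f n| <= 1) (b : int) (N m : nat) :
  `|\sum_(0 <= k < N) f (b + (k + m)%N%:Z) - \sum_(0 <= k < N) f (b + k%:Z)| <= 2 * m%:R.
Proof.
elim: m => [|m IH].
  by rewrite (eq_bigr (fun k => f (b + k%:Z))) ?subrr ?normr0 ?mulr0 // => k _; rewrite addn0.
pose g k := f (b + (k + m)%N%:Z).
have e1 : \sum_(0 <= k < N) f (b + (k + m.+1)%N%:Z) = \sum_(0 <= k < N) g k.+1.
  by apply: eq_bigr => k _; rewrite /g addnS addSn.
have e2 : \sum_(0 <= k < N.+1) g k = g 0%N + \sum_(0 <= k < N) g k.+1 by rewrite big_nat_recl.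
have e3 : \sum_(0 <= k < N.+1) g k = \sum_(0 <= k < N) g k + g N by rewrite big_nat_recr.
have -> : \sum_(0 <= k < N) f (b + (k + m.+1)%N%:Z) - \sum_(0 <= k < N) f (b + k%:Z)
   = (g N - g 0%N) + (\sum_(0 <= k < N) g k - \sum_(0 <= k < N) f (b + k%:Z)).
  have h1 : \sum_(0 <= k < N) g k.+1 = \sum_(0 <= k < N.+1) g k - g 0%N by rewrite e2 addrC addKr.
  have h2 : \sum_(0 <= k < N) g k = \sum_(0 <= k < N.+1) g k - g N by rewrite e3 addrK.
  rewrite e1 h1 h2; ring.
apply: (le_trans (ler_normD _ _)).
rewrite -[m.+1%:R]natr1 mulrDr mulr1 addrC; apply: lerD => //.
apply: (le_trans (ler_normB _ _)).
apply: le_trans (lerD (hf _) (hf _)) _; by [].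
Qed.

Lemma cs_sum (x : nat -> C) (N : nat) (hx : forall k, 0 <= x k) :
  (\sum_(0 <= k < N) x k) ^+ 2 <= N%:R * \sum_(0 <= k < N) x k ^+ 2.
Proof.
rewrite -subr_ge0.
have e : \sum_(0 <= k < N) \sum_(0 <= l < N) (x k - x l) ^+ 2
   = 2 * (N%:R * \sum_(0 <= k < N) x k ^+ 2 - (\sum_(0 <= k < N) x k) ^+ 2).
  have -> : \sum_(0 <= k < N) \sum_(0 <= l < N) (x k - x l) ^+ 2 =
    \sum_(0 <= k < N) (\sum_(0 <= l < N) x k ^+ 2 + \sum_(0 <= l < N) x l ^+ 2
       - 2 * (x k * \sum_(0 <= l < N) x l)).
    apply: eq_bigr => k _.
    rewrite mulr_sumr mulr_sumr -big_split -sumrB /=.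
    by apply: eq_bigr => l _; ring.
  rewrite sumrB big_split /=.
  have c1 : \sum_(0 <= i < N) \sum_(0 <= l < N) x i ^+ 2 = N%:R * \sum_(0 <= k < N) x k ^+ 2.
    rewrite (eq_bigr (fun i => x i ^+ 2 *+ N)); last by move=> i _; rewrite sumr_const_nat subn0.
    by rewrite sumrMnl mulr_natl.
  have c2 : \sum_(0 <= i < N) \sum_(0 <= l < N) x l ^+ 2 = N%:R * \sum_(0 <= k < N) x k ^+ 2.
    by rewrite sumr_const_nat subn0 mulr_natl.
  have c3 : \sum_(0 <= i < N) 2 * (x i * \sum_(0 <= l < N) x l) = 2 * (\sum_(0 <= k < N) x k) ^+ 2.
    by rewrite -mulr_sumr -mulr_suml expr2.
  rewrite c1 c2 c3; ring.
have h2 : 0 <= \sum_(0 <= k < N) \sum_(0 <= l < N) (x k - x l) ^+ 2.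
  apply: sumr_ge0 => k _; apply: sumr_ge0 => l _.
  rewrite -real_normK ?exprn_ge0 ?normr_ge0 //.
  by apply: rpredB; apply: ger0_real.
rewrite e in h2.
by rewrite pmulr_rge0 in h2.
Qed.

Lemma nat_bound (M N r : nat) (h : (M ^ 3 * r ^ 2 <= N ^ 2)%N) (h5 : (5 <= M)%N) : (2 * (M * M.+1 * r) ^ 2 <= 3 * N ^ 2 * M)%N.
Proof.
have h1 : (2 * M.+1 ^ 2 <= 3 * M ^ 2)%N by nia.
have -> : (2 * (M * M.+1 * r) ^ 2 = (2 * M.+1 ^ 2) * (M ^ 2 * r ^ 2))%N by ring.
apply: (leq_trans (leq_mul h1 (leqnn _))).
have -> : (3 * M ^ 2 * (M ^ 2 * r ^ 2) = (3 * M) * (M ^ 3 * r ^ 2))%N by ring.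
have -> : (3 * N ^ 2 * M = (3 * M) * N ^ 2)%N by ring.
by apply: leq_mul.
Qed.

Lemma tri_sum (M : nat) : ((\sum_(1 <= i < M.+1) i) * 2 = M * M.+1)%N.
Proof.
elim: M => [|M IH]; first by rewrite big_nil.
rewrite big_nat_recr //= mulnDl IH; lia.
Qed.

End H.

Theorem lemma6p3 (C : numClosedFieldType) (r Q N M : nat) (a : int) (aq ar aQ : int -> C)
  (hr : (0 < r)%N) (hQ : (0 < Q)%N) (hcop : coprime r Q)
  (per_q : forall n : int, aq (n + (r * Q)%N%:Z) = aq n)
  (per_r : forall n : int, ar (n + r%:Z) = ar n)
  (per_Q : forall n : int, aQ (n + Q%:Z) = aQ n)
  (bnd_q : forall n : int, `|aq n| <= 1)
  (bnd_r : forall n : int, `|ar n| <= 1)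
  (bnd_Q : forall n : int, `|aQ n| <= 1)
  (hmul : forall n : int, aq n = ar n * aQ n)
  (hN : (0 < N)%N) (hM : is_floor_pow23 N r M) (hM5 : (5 <= M)%N) :
  `|avgI a N aq| ^+ 2 <=
    5 / M%:R + 2 / (M%:R ^+ 2) *
      \sum_(1 <= i < M.+1) \sum_(1 <= j < M.+1 | i != j)
        `|avgI a N (fun n => aQ (n + (i * r)%N%:Z) * (aQ (n + (j * r)%N%:Z))^*)|.
Proof.
set c := \sum_(1 <= i < M.+1) _.
set S := \sum_(0 <= k < N) aq (a + k%:Z).
have hS : avgI a N aq = N%:R^-1 * S by [].
have ar_per : forall (i : nat) n, ar (n + (i * r)%N%:Z) = ar n.
  elim=> [|i IH] n; first by rewrite mul0n addr0.
  by rewrite mulSn PoszD addrA IH per_r.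
pose T i := \sum_(0 <= k < N) aq (a + (k + i * r)%N%:Z).
pose v k := \sum_(1 <= i < M.+1) aQ (a + k%:Z + (i * r)%N%:Z).
pose Y := \sum_(1 <= i < M.+1) T i.
pose Z := \sum_(1 <= i < M.+1) (S - T i).
have hMS : M%:R * S = Y + Z.
  rewrite /Y /Z -big_split /=.
  rewrite (eq_bigr (fun _ => S)); last by move=> i _; rewrite addrC subrK.
  by rewrite sumr_const_nat subSS subn0 mulr_natl.
have hZ : `|Z| <= (M * M.+1 * r)%N%:R.
  apply: (le_trans (ler_norm_sum _ _ _)).
  apply: (le_trans (y := \sum_(1 <= i < M.+1) 2 * (i * r)%N%:R)).
    apply: ler_sum => i _; rewrite distrC; exact: shift_bound.
  have -> : (M * M.+1 * r = \sum_(1 <= i < M.+1) (i * 2 * r))%N.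
    by rewrite -big_distrl -big_distrl /= tri_sum.
  rewrite natr_sum; apply: ler_sum => i _.
  rewrite le_eqVlt; apply/orP; left; apply/eqP; rewrite !natrM; ring.
have hY : `|Y| <= \sum_(0 <= k < N) `|v k|.
  have -> : Y = \sum_(0 <= k < N) ar (a + k%:Z) * v k.
    rewrite /Y /T (eq_bigr (fun i => \sum_(0 <= k < N) ar (a + k%:Z) * aQ (a + k%:Z + (i * r)%N%:Z))).
      by rewrite exchange_big /=; apply: eq_bigr => k _; rewrite /v mulr_sumr.
    by move=> i _; apply: eq_bigr => k _; rewrite hmul PoszD addrA ar_per.
  apply: (le_trans (ler_norm_sum _ _ _)); apply: ler_sum => k _.
  by rewrite normrM ler_piMl.
have hNn : N%:R != 0 :> C by rewrite pnatr_eq0 -lt0n.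
have hV : \sum_(0 <= k < N) `|v k| ^+ 2 <= N%:R * M%:R + N%:R * c.
  pose G k i j := aQ (a + k%:Z + (i * r)%N%:Z) * (aQ (a + k%:Z + (j * r)%N%:Z))^*.
  have e1 : \sum_(0 <= k < N) `|v k| ^+ 2 =
     \sum_(1 <= i < M.+1) \sum_(1 <= j < M.+1) \sum_(0 <= k < N) G k i j.
    rewrite (eq_bigr (fun k => \sum_(1 <= i < M.+1) \sum_(1 <= j < M.+1) G k i j)).
      rewrite exchange_big /=; apply: eq_bigr => i _.
      by rewrite exchange_big.
    move=> k _; rewrite normCK /v rmorph_sum mulr_suml; apply: eq_bigr => i _.
    by rewrite mulr_sumr.
  have hre : \sum_(0 <= k < N) `|v k| ^+ 2 \is Num.real.
    by apply: ger0_real; apply: sumr_ge0 => k _; apply: exprn_ge0.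
  apply: (le_trans (real_ler_norm hre)); rewrite e1.
  apply: (le_trans (ler_norm_sum _ _ _)).
  have eNM : N%:R * M%:R = \sum_(1 <= i < M.+1) (N%:R : C).
    by rewrite sumr_const_nat subSS subn0 mulr_natr.
  rewrite eNM /c mulr_sumr -big_split /=.
  rewrite big_seq [X in _ <= X]big_seq; apply: ler_sum => i hi.
  apply: (le_trans (ler_norm_sum _ _ _)).
  rewrite (bigD1_seq i) ?iota_uniq //=.
  apply: lerD.
    apply: (le_trans (ler_norm_sum _ _ _)).
    rewrite -[X in _ <= X%:R](subn0 N) -sumr_const_nat; apply: ler_sum => k _.
    rewrite normrM norm_conjC; apply: mulr_ile1 => //.
  rewrite mulr_sumr; rewrite (eq_bigl (fun j => i != j)); last by move=> j; rewrite eq_sym.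
  apply: ler_sum => j _.
  have -> : \sum_(0 <= k < N) G k i j = N%:R * avgI a N (fun n => aQ (n + (i * r)%N%:Z) * (aQ (n + (j * r)%N%:Z))^*).
    by rewrite /avgI mulrA mulfV ?mul1r.
  by rewrite normrM normr_nat.
have hCS := @cs_sum C (fun k => `|v k|) N (fun k => normr_ge0 _).
simpl in hCS.
have hMn : M%:R != 0 :> C by rewrite pnatr_eq0 -lt0n; apply: leq_trans hM5.
have two0 : 0 <= 2 :> C by rewrite ler0n.
have h1 : M%:R * `|S| <= `|Y| + `|Z|.
  by rewrite -(normr_nat C M) -normrM hMS ler_normD.
have h2 : (M%:R * `|S|) ^+ 2 <= 2 * `|Y| ^+ 2 + 2 * `|Z| ^+ 2.
  apply: (le_trans (y := (`|Y| + `|Z|) ^+ 2)).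
    rewrite !expr2; apply: ler_pM => //; apply: mulr_ge0 => //; exact: ler0n.
  rewrite -subr_ge0.
  have -> : 2 * `|Y| ^+ 2 + 2 * `|Z| ^+ 2 - (`|Y| + `|Z|) ^+ 2 = (`|Y| - `|Z|) ^+ 2 by ring.
  by rewrite -real_normK ?exprn_ge0 // rpredB // normr_real.
have h3 : `|Y| ^+ 2 <= N%:R * (N%:R * M%:R + N%:R * c).
  apply: (le_trans (y := (\sum_(0 <= k < N) `|v k|) ^+ 2)).
    by rewrite !expr2; apply: ler_pM.
  apply: (le_trans hCS); apply: ler_wpM2l => //; exact: ler0n.
have h4 : 2 * `|Z| ^+ 2 <= 3 * N%:R ^+ 2 * M%:R.
  have hn := @nat_bound M N r hM.1 hM5.
  have hc : ((2 * (M * M.+1 * r) ^ 2)%N%:R <= (3 * N ^ 2 * M)%N%:R :> C) by rewrite ler_nat.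
  have e1 : (3 * N ^ 2 * M)%N%:R = 3 * N%:R ^+ 2 * M%:R :> C by rewrite !natrM expr2.
  have e2 : (2 * (M * M.+1 * r) ^ 2)%N%:R = 2 * ((M * M.+1 * r)%N%:R) ^+ 2 :> C by rewrite -natrX -natrM.
  rewrite -e1; apply: le_trans hc; rewrite e2; apply: ler_wpM2l => //.
  by rewrite !expr2; apply: ler_pM.
rewrite hS normrM normfV normr_nat.
rewrite -subr_ge0.
have -> : 5 / M%:R + 2 / M%:R ^+ 2 * c - (N%:R^-1 * `|S|) ^+ 2 =
   (N%:R ^+ 2 * (5 * M%:R + 2 * c) - (M%:R * `|S|) ^+ 2) / (M%:R ^+ 2 * N%:R ^+ 2).
  by field; rewrite hMn hNn.
apply: divr_ge0; last by apply: mulr_ge0; apply: exprn_ge0; exact: ler0n.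
rewrite subr_ge0; apply: (le_trans h2).
apply: (le_trans (lerD (ler_wpM2l two0 h3) h4)).
rewrite le_eqVlt; apply/orP; left; apply/eqP; ring.
Qed.
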